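(* (i) Suppose the first Piola–Kirchhoff stress of a Cauchy elastic solid is given by $P^{aA}=g^{ab}\sum_{i=1}^3\phi_i\,\partial\psi_i/\partial F^b{}_A$ with scalar functions $\phi_i,\psi_i$ of $(X,\mathbf F,\mathbf G,\mathbf g)$ (some of which may be identically zero or constant). If the response is objective, i.e. all $\phi_i$ and $\psi_i$ depend on $\mathbf F$ only through $\mathbf C^\flat=\mathbf F^\star\mathbf g\mathbf F$, then the balance of angular momentum $P^{aA}F^b{}_A=P^{bA}F^a{}_A$ holds for every $\mathbf F$. (ii) The converse fails: there exist Cauchy elastic response functions (e.g. Ericksen solids $P^{aA}=g^{ab}\phi_1(\mathbf F,\mathbf G,\mathbf g)\partial\psi_1/\partial F^b{}_A$ with $\psi_1$ a function of $(\mathbf C^\flat,\mathbf G)$ and $\phi_1$ a nonvanishing function of $\mathbf F$ that is not invariant under $\mathbf F\mapsto\mathbf Q\mathbf F$ for $\mathbf g$-orthogonal $\mathbf Q$) that satisfy the balance of angular momentum for every $\mathbf F$ but are not objective, i.e. $\hat{\mathbf P}(\mathbf Q\mathbf F)\neq\mathbf Q\hat{\mathbf P}(\mathbf F)$ for some $\mathbf g$-orthogonal $\mathbf Q$.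
   Context: Setting: a body $(\mathcal B,\mathbf G)$ deforming in Euclidean space $(\mathcal S,\mathbf g)$ with deformation gradient $\mathbf F$ (components $F^a{}_A$), dual $\mathbf F^\star$, right Cauchy–Green tensor $\mathbf C^\flat=\mathbf F^\star\mathbf g\mathbf F$. A Cauchy elastic solid has constitutive law $\mathbf P=\hat{\mathbf P}(X,\mathbf F,\mathbf G,\mathbf g)$ for the first Piola–Kirchhoff stress, with no energy function assumed. Objectivity means $\hat{\mathbf P}(X,\mathbf Q\mathbf F,\mathbf G,\mathbf g)=\mathbf Q\hat{\mathbf P}(X,\mathbf F,\mathbf G,\mathbf g)$ for all $\mathbf g$-orthogonal $\mathbf Q$. Balance of angular momentum means $\mathbf P\mathbf F^\star=\mathbf F\mathbf P^\star$, i.e. $P^{aA}F^b{}_A=P^{bA}F^a{}_A$. *)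

(* Defs.v *)
(* Index conventions: F : 'M_3 with F b A = F^b_A (row = spatial index,
   column = material index); g : 'M_3 with g a b = g_{ab} (covariant spatial
   metric), so g^{ab} = invmx g. *)
From HB Require Import structures.
From mathcomp Require Import all_boot all_order all_algebra.
From mathcomp Require Import all_classical all_reals all_analysis.
Set Implicit Arguments. Unset Strict Implicit. Unset Printing Implicit Defensive.
Import Order.TTheory GRing.Theory Num.Theory.
Import numFieldNormedType.Exports.
Local Open Scope ring_scope.

Definition is_metric (R : realType) (g : 'M[R]_3) : Prop :=
  g^T = g /\ forall v : 'rV[R]_3, v != 0 -> 0 < (v *m g *m v^T) 0 0.

Definition g_orthogonal (R : realType) (g Q : 'M[R]_3) : Prop :=
  Q^T *m g *m Q = g.

Definition rCG (R : realType) (g F : 'M[R]_3) : 'M[R]_3 := F^T *m g *m F.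

Definition dF (R : realType) (psi : 'M[R]_3 -> R) (F : 'M[R]_3) : 'M[R]_3 :=
  \matrix_(b < 3, A < 3) ('D_(delta_mx b A) psi F : R).

Definition PK (R : realType) (g : 'M[R]_3) (phi psi : 'I_3 -> 'M[R]_3 -> R)
  (F : 'M[R]_3) : 'M[R]_3 :=
  invmx g *m \sum_(i < 3) (phi i F *: dF (psi i) F).

Definition balance_ang_mom (R : realType) (P : 'M[R]_3 -> 'M[R]_3) : Prop :=
  forall F : 'M[R]_3, P F *m F^T = (P F *m F^T)^T.

Definition objective (R : realType) (g : 'M[R]_3) (P : 'M[R]_3 -> 'M[R]_3) : Prop :=
  forall Q F : 'M[R]_3, g_orthogonal g Q -> P (Q *m F) = Q *m P F.

Definition through_C (R : realType) (g : 'M[R]_3) (f : 'M[R]_3 -> R) : Prop :=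
  exists f' : 'M[R]_3 -> R, forall F, f F = f' (rCG g F).

(* Main.v *)
Require Import Defs.
From HB Require Import structures.
From mathcomp Require Import all_boot all_order all_algebra.
From mathcomp Require Import all_classical all_reals all_analysis.
From mathcomp Require Import ring lra.
Import Order.TTheory GRing.Theory Num.Theory.
Import numFieldNormedType.Exports.
Local Open Scope ring_scope.

Section S.
Variable R : realType.
Variable g : 'M[R]_3.
Hypothesis gs : g^T = g.

Definition sc (w : 'cV[R]_3) : R := (w^T *m g *m w) 0 0.
Definition refl (w : 'cV[R]_3) : 'M[R]_3 := 1%:M - (2 / sc w) *: (w *m w^T *m g).

Lemma scE w : w^T *m g *m w = (sc w)%:M.
Proof. by rewrite {1}[w^T *m g *m w]mx11_scalar. Qed.

Lemma XX w : (w *m w^T *m g) *m (w *m w^T *m g) = sc w *: (w *m w^T *m g).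
Proof.
rewrite !mulmxA.
have -> : w *m w^T *m g *m w = w *m (w^T *m g *m w) by rewrite !mulmxA.
by rewrite scE mul_mx_scalar -!scalemxAl.
Qed.

Lemma XT (w : 'cV[R]_3) : (w *m w^T *m g)^T *m g = g *m (w *m w^T *m g).
Proof. by rewrite !trmx_mul trmxK gs !mulmxA. Qed.

Lemma refl_orth w : sc w != 0 -> (refl w)^T *m g *m refl w = g.
Proof.
move=> s0; rewrite /refl; set X := w *m w^T *m g; set a := 2 / sc w.
have -> : (1%:M - a *: X)^T = 1%:M - a *: X^T.
  by apply/matrixP => i j; rewrite !mxE eq_sym.
rewrite mulmxBl mul1mx -scalemxAl XT.
rewrite -/X mulmxBl !mulmxBr !mulmx1 -!scalemxAl -!scalemxAr -mulmxA XX -!scalemxAr !scalerA.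
have -> : a * sc w = 2 by rewrite /a mulfVK.
rewrite -/X; set Y := g *m X.
rewrite (_ : (a*2) *: Y = a *: Y + a *: Y); last by rewrite -scalerDl mulr_natr mulr2n.
by rewrite opprB addrK subrK.
Qed.
Lemma rat_der (N P : {poly R}) : P.[0] != 0 ->
  derivable (fun t => N.[t] * (P.[t])^-1) 0 1 /\
  'D_1 (fun t => N.[t] * (P.[t])^-1) 0 =
     N.[0] * (- (P.[0])^-2 * (P^`()).[0]) + (P.[0])^-1 * (N^`()).[0].
Proof.
move=> P0.
have dN : is_derive (0:R) 1 (horner N) (N^`()).[0] by exact: is_derive_poly.
have dP : is_derive (0:R) 1 (horner P) (P^`()).[0] by exact: is_derive_poly.
have dV : derivable (fun y => (horner P y)^-1) 0 1 by apply: derivableV.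
have -> : (fun t => N.[t] * (P.[t])^-1) = horner N * (fun y => (horner P y)^-1) by [].
split; first exact: derivableM.
rewrite deriveM // deriveV // !derive_val.
by [].
Qed.
Definition Pol (s0 s1 q : R) : {poly R} := s0%:P + s1 *: 'X + q *: 'X^2.
Lemma PolE s0 s1 q t : (Pol s0 s1 q).[t] = s0 + s1 * t + q * t^+2.
Proof. by rewrite /Pol !hornerE. Qed.
Lemma Pol'E s0 s1 q : ((Pol s0 s1 q)^`()).[0] = s1.
Proof. by rewrite /Pol !derivD derivC !derivZ derivX derivXn !hornerE /=. Qed.
Lemma X2' : (('X^2 : {poly R})^`()).[0] = 0.
Proof. by rewrite derivXn !hornerE /=. Qed.
Lemma X1' : (('X : {poly R})^`()).[0] = 1.
Proof. by rewrite derivX hornerE. Qed.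
Lemma C1' : ((1 : {poly R})^`()).[0] = 0.
Proof. by rewrite -polyC1 derivC hornerE. Qed.

Lemma orth_mul (Q1 Q2 : 'M[R]_3) : Q1^T *m g *m Q1 = g -> Q2^T *m g *m Q2 = g ->
  (Q1 *m Q2)^T *m g *m (Q1 *m Q2) = g.
Proof.
move=> h1 h2; rewrite trmx_mul.
have -> : Q2^T *m Q1^T *m g *m (Q1 *m Q2) = Q2^T *m (Q1^T *m g *m Q1) *m Q2 by rewrite !mulmxA.
by rewrite h1.
Qed.

Lemma refl_v v : sc v != 0 -> refl v *m v = - v.
Proof.
move=> s0; rewrite /refl mulmxBl mul1mx -scalemxAl.
have -> : v *m v^T *m g *m v = v *m (v^T *m g *m v) by rewrite !mulmxA.
rewrite scE mul_mx_scalar scalerA mulfVK // scaler_nat mulr2n.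
by rewrite opprD addrA subrr sub0r.
Qed.

Lemma refl_u v u : refl v *m u = u - ((2 / sc v) * (v^T *m g *m u) 0 0) *: v.
Proof.
rewrite /refl mulmxBl mul1mx -scalemxAl.
have -> : v *m v^T *m g *m u = v *m (v^T *m g *m u) by rewrite !mulmxA.
by rewrite {1}[v^T *m g *m u]mx11_scalar mul_mx_scalar scalerA.
Qed.

Lemma refl_invol v : sc v != 0 -> refl v *m refl v = 1%:M.
Proof.
move=> s0; rewrite /refl; set a := 2 / sc v.
rewrite mulmxBl mul1mx mulmxBr mulmx1 -!scalemxAl -!scalemxAr XX !scalerA.
have -> : a * a * sc v = a * 2 by rewrite /a -mulrA mulfVK.
set Y := _ *m _ *m g.
rewrite (_ : (a*2) *: Y = a *: Y + a *: Y); last by rewrite -scalerDl mulr_natr mulr2n.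
by rewrite opprB addrK subrK.
Qed.

Lemma trD (v u : 'cV[R]_3) (t : R) : (v + t *: u)^T = v^T + t *: u^T.
Proof. by apply/matrixP => i j; rewrite !mxE. Qed.

Lemma p_sym (v u : 'cV[R]_3) : (u^T *m g *m v) 0 0 = (v^T *m g *m u) 0 0.
Proof.
have -> : (u^T *m g *m v) 0 0 = ((u^T *m g *m v)^T) 0 0 by rewrite [RHS]mxE.
by rewrite !trmx_mul trmxK gs mulmxA.
Qed.

Lemma sc_pol (v u : 'cV[R]_3) t :
  sc (v + t *: u) = (Pol (sc v) ((v^T *m g *m u) 0 0 + (u^T *m g *m v) 0 0) (sc u)).[t].
Proof.
rewrite PolE /sc trD !mulmxDl !mulmxDr -!scalemxAl -!scalemxAr !mxE.
ring.
Qed.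

Lemma wwT (v u : 'cV[R]_3) t : (v + t *: u) *m (v + t *: u)^T =
  v *m v^T + t *: (u *m v^T + v *m u^T) + t^+2 *: (u *m u^T).
Proof.
rewrite trD mulmxDl !mulmxDr -!scalemxAl -!scalemxAr !scalerA scalerDr.
set A := v *m v^T; set B := v *m u^T; set C := u *m v^T; set D := u *m u^T.
by apply/matrixP => i j; rewrite !mxE; ring.
Qed.



Lemma scalemxAr' m n q (a : R) (X : 'M[R]_(m, n)) (Y : 'M[R]_(n, q)) : X *m (a *: Y) = a *: (X *m Y).
Proof. by rewrite scalemxAr. Qed.

Lemma scalemxAl' m n q (a : R) (X : 'M[R]_(m, n)) (Y : 'M[R]_(n, q)) : (a *: X) *m Y = a *: (X *m Y).
Proof. by rewrite scalemxAl. Qed.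

Lemma hc_alg (Rv F G X0 X1 X2 : 'M[R]_3) (s t : R) :
  Rv *m (1%:M - (2 / s) *: ((X0 + t *: X1 + t^+2 *: X2) *m G)) *m F =
  Rv *m F - ((1 * s^-1) *: (2 *: (Rv *m X0 *m G *m F)) + (t * s^-1) *: (2 *: (Rv *m X1 *m G *m F))
     + (t^+2 * s^-1) *: (2 *: (Rv *m X2 *m G *m F))).
Proof.
rewrite mulmxBr mulmx1 mulmxBl; congr (_ - _).
rewrite !(mulmxDl, mulmxDr, scalemxAl', scalemxAr', scalerDr) !mulmxA !scalerA.
move: (Rv *m X0 *m G *m F) (Rv *m X1 *m G *m F) (Rv *m X2 *m G *m F) => Y0 Y1 Y2.
by apply/matrixP => i j; rewrite !mxE; ring.
Qed.

Lemma h1 (t : R) : (1 : {poly R}).[t] = 1.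
Proof. by rewrite -polyC1 hornerC. Qed.

Lemma dlemma (f0 f1 f2 : R -> R) (C0 C1 C2 A : 'M[R]_3) (c : R -> 'M[R]_3) :
  c = cst A - ((fun t => f0 t *: C0) + (fun t => f1 t *: C1) + (fun t => f2 t *: C2)) ->
  differentiable f0 0 -> differentiable f1 0 -> differentiable f2 0 ->
  'd c 0 1 = - ('d f0 0 1 *: C0 + 'd f1 0 1 *: C1 + 'd f2 0 1 *: C2).
Proof.
move=> -> d0 d1 d2.
have dZ0 := differentiableZl C0 d0.
have dZ1 := differentiableZl C1 d1.
have dZ2 := differentiableZl C2 d2.
have d01 := differentiableD dZ0 dZ1.
rewrite diffB; last first.

- exact: (differentiableD d01 dZ2).
- exact: differentiable_cst.
set G := (_ + _ + _).
have h0 : ('d (cst A) 0 : R -> 'M[R]_3) 1 = 0.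
  by rewrite diff_cst.
transitivity (0 - 'd G 0 1); first by rewrite -h0.
rewrite sub0r; congr (- _).
apply: etrans (congr1 (fun h => h 1) (diffD d01 dZ2)) _.
apply: etrans (congr1 (fun h => h + _) (congr1 (fun h => h 1) (diffD dZ0 dZ1))) _.
congr (_ + _ + _).
- exact: (congr1 (fun h => h 1) (diffZl C0 d0)).
- exact: (congr1 (fun h => h 1) (diffZl C1 d1)).
- exact: (congr1 (fun h => h 1) (diffZl C2 d2)).
Qed.

Lemma final_alg (v u : 'cV[R]_3) (Rv G F C2 : 'M[R]_3) (s0 p k0 k1 k2 : R) :
  s0 != 0 -> Rv *m v = - v -> Rv *m u = u - ((2 / s0) * p) *: v ->
  k0 = - (s0 ^- 2) * (p + p) -> k1 = s0^-1 -> k2 = 0 ->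
  - (k0 *: (2 *: (Rv *m (v *m v^T) *m G *m F)) + k1 *: (2 *: (Rv *m (u *m v^T + v *m u^T) *m G *m F))
     + k2 *: C2) = (2 / s0) *: ((v *m u^T - u *m v^T) *m G *m F).
Proof.
move=> s0n hv hu -> -> ->.
rewrite scale0r addr0 mulmxDr !mulmxA hv hu.
rewrite !(mulmxDl, mulmxBl, mulNmx, scalemxAl', scalemxAr') ?mulmxA.
move: (v *m v^T *m G *m F) (u *m v^T *m G *m F) (v *m u^T *m G *m F) => Y1 Y2 Y3.
by apply/matrixP => i j; rewrite !mxE; field.
Qed.

Lemma curve (psi : 'M[R]_3 -> R) (hd : forall F, differentiable psi F)
  (hinv : forall Q F, Q^T *m g *m Q = g -> psi (Q *m F) = psi F)
  (F : 'M[R]_3) (v u : 'cV[R]_3) (hs : forall t : R, sc (v + t *: u) != 0) :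
  'd psi F ((v *m u^T - u *m v^T) *m g *m F) = 0.
Proof.
set s0 := sc v; set p := (v^T *m g *m u) 0 0.
have s0n : s0 != 0 by have := hs 0; rewrite scale0r addr0.
set P := Pol s0 (p + p) (sc u).
have hP : forall t, sc (v + t *: u) = P.[t] by move=> t; rewrite sc_pol (p_sym v u).
have P0 : P.[0] != 0 by rewrite -hP; apply: hs.
pose r (N : {poly R}) t := N.[t] * (P.[t])^-1.
set A := refl v *m F.
pose C0 := 2 *: (refl v *m (v *m v^T) *m g *m F).
pose C1 := 2 *: (refl v *m (u *m v^T + v *m u^T) *m g *m F).
pose C2 := 2 *: (refl v *m (u *m u^T) *m g *m F).
pose c := fun t => A - (r 1 t *: C0 + r 'X t *: C1 + r ('X^2) t *: C2).
have hc : forall t, c t = refl v *m refl (v + t *: u) *m F.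
  move=> t; rewrite /c /r h1 hornerX hornerXn [refl (v + t *: u)]/refl wwT hP.
  by rewrite hc_alg.
have orth : forall t, (refl v *m refl (v + t *: u))^T *m g *m (refl v *m refl (v + t *: u)) = g.
  by move=> t; apply: orth_mul; apply: refl_orth => //; apply: hs.
have hconst : psi \o c = cst (psi F) by apply/funext => t /=; rewrite hc hinv.
have c0 : c 0 = F by rewrite hc scale0r addr0 refl_invol // mul1mx.
have dr : forall N, differentiable (r N) 0.
  by move=> N; apply/derivable1_diffP; exact: (rat_der N P P0).1.
have Dr : forall N, 'd (r N) 0 1 = N.[0] * (- (P.[0])^-2 * (P^`()).[0]) + (P.[0])^-1 * (N^`()).[0].
  by move=> N; rewrite -deriveE //; exact: (rat_der N P P0).2.
have ceq : c = cst A - ((fun t => r 1 t *: C0) + (fun t => r 'X t *: C1) + (fun t => r ('X^2) t *: C2)) by [].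
have dc : differentiable c 0.
  rewrite ceq; apply: differentiableB; first exact: differentiable_cst.
  by apply: differentiableD; [apply: differentiableD|]; apply: differentiableZl.
have dZ : forall N (C : 'M[R]_3), differentiable (fun t => r N t *: C) 0.
  by move=> N C; apply: differentiableZl.
have dc1 : 'd c 0 1 = - ('d (r 1) 0 1 *: C0 + 'd (r 'X) 0 1 *: C1 + 'd (r 'X^2) 0 1 *: C2).
  exact: (@dlemma _ _ _ _ _ _ _ _ ceq (dr 1) (dr 'X) (dr 'X^2)).
have z0 : ('d (psi \o c) 0 : R -> R) 1 = 0.
  by rewrite hconst diff_cst.
have z : 'd psi (c 0) ('d c 0 1) = 0.
  exact: etrans (esym (congr1 (fun h => h 1) (diff_comp dc (hd (c 0))))) z0.
move: z; rewrite c0 => z.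
have z2 := etrans (esym (congr1 ('d psi F) dc1)) z.
have P0e : P.[0] = s0 by rewrite /P PolE mulr0 expr0n /= mulr0 !addr0.
have P'e : (P^`()).[0] = p + p by rewrite /P Pol'E.
have k0 : 'd (r 1) 0 1 = - (s0 ^- 2) * (p + p).
  by rewrite Dr h1 C1' P0e P'e mulr0 addr0 mul1r.
have k1 : 'd (r 'X) 0 1 = s0^-1.
  by rewrite Dr hornerX X1' P0e mul0r add0r mulr1.
have k2 : 'd (r 'X^2) 0 1 = 0.
  by rewrite Dr hornerXn X2' expr0n /= mul0r add0r mulr0.
have E := final_alg v u (refl v) g F C2 s0 p _ _ _ s0n (refl_v v s0n) (refl_u v u) k0 k1 k2.
have z3 := etrans (esym (congr1 ('d psi F) E)) z2.
move: z3; rewrite linearZ /= => /eqP; rewrite scaler_eq0 => /orP[|/eqP //].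
by rewrite mulf_eq0 invr_eq0 (negbTE s0n) orbF pnatr_eq0.
Qed.
End S.

Section T.
Variable R : realType.
Local Open Scope classical_set_scope.

Lemma dpsi_sum (psi : 'M[R]_3 -> R) F K : differentiable psi F ->
  'd psi F K = \sum_i \sum_j K i j * dF psi F i j.
Proof.
move=> hd; rewrite {1}(matrix_sum_delta K) linear_sum; apply: eq_bigr => i _.
rewrite linear_sum; apply: eq_bigr => j _.
by rewrite linearZ /dF mxE deriveE.
Qed.

Lemma sum_ind (Y : 'I_3 -> R) a : \sum_i (i == a)%:R * Y i = Y a.
Proof.
rewrite (bigD1 a) //= eqxx mul1r big1 ?addr0 // => i /negbTE ->.
by rewrite mul0r.
Qed.

Lemma deltaM (a b : 'I_3) (M : 'M[R]_3) i j : (delta_mx a b *m M) i j = (i == a)%:R * M b j.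
Proof.
rewrite mxE (bigD1 b) //= big1 ?addr0 => [|k kb]; rewrite mxE.
  by rewrite eqxx andbT.
by rewrite (negbTE kb) andbF mul0r.
Qed.

Lemma subE (A B : 'M[R]_3) i j : (A - B) i j = A i j - B i j.
Proof. by rewrite !mxE. Qed.

Lemma sym_from (D M : 'M[R]_3) (a b : 'I_3) :
  \sum_i \sum_j ((delta_mx a b - delta_mx b a) *m M) i j * D i j = 0 ->
  (M *m D^T) a b = (M *m D^T) b a.
Proof.
have E : forall x y, \sum_i \sum_j (delta_mx x y *m M) i j * D i j = (M *m D^T) y x.
  move=> x y; rewrite mxE.
  under eq_bigr do under eq_bigr do rewrite deltaM -mulrA.
  under eq_bigr do rewrite -mulr_sumr.
  rewrite sum_ind; apply: eq_bigr => j _; by rewrite mxE.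
under eq_bigr do under eq_bigr do rewrite mulmxBl subE mulrBl.
under eq_bigr do rewrite sumrB.
by rewrite sumrB !E => /eqP; rewrite subr_eq0 => /eqP ->.
Qed.

Lemma key_sym (g : 'M[R]_3) (gs : g^T = g)
  (gpd : forall v : 'rV[R]_3, v != 0 -> 0 < (v *m g *m v^T) 0 0)
  (psi : 'M[R]_3 -> R) (hd : forall F, differentiable psi F)
  (hC : exists f' : 'M[R]_3 -> R, forall F, psi F = f' (F^T *m g *m F)) F a b :
  (g *m F *m (dF psi F)^T) a b = (g *m F *m (dF psi F)^T) b a.
Proof.
case: (eqVneq a b) => [-> //|ab].
apply: sym_from; rewrite -dpsi_sum //.
pose v : 'cV[R]_3 := delta_mx a 0; pose u : 'cV[R]_3 := delta_mx b 0.
have hs : forall t : R, @sc R g (v + t *: u) != 0.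
  move=> t; rewrite /sc.
  have hx : (v + t *: u)^T != 0.
    apply/eqP => /(congr1 (fun m : 'rV[R]_3 => m 0 a)); rewrite !mxE eqxx (negbTE ab).
    by rewrite /= mulr0 addr0; apply/eqP; rewrite oner_eq0.
  by have := gpd _ hx; rewrite trmxK => /gt_eqF ->.
have hinv : forall Q F, Q^T *m g *m Q = g -> psi (Q *m F) = psi F.
  move=> Q F0 hQ; case: hC => f' hf; rewrite !hf trmx_mul; congr f'.
  have -> : F0^T *m Q^T *m g *m (Q *m F0) = F0^T *m (Q^T *m g *m Q) *m F0 by rewrite !mulmxA.
  by rewrite hQ.
have := @curve R g gs psi hd hinv F v u hs.
by rewrite /v /u !trmx_delta !mul_delta_mx -mulmxA.
Qed.

Lemma unit_g (g : 'M[R]_3)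
  (gpd : forall v : 'rV[R]_3, v != 0 -> 0 < (v *m g *m v^T) 0 0) : g \in unitmx.
Proof.
rewrite unitmxE unitfE; apply/negP => /det0P [v v0 vg].
by have := gpd v v0; rewrite vg mul0mx mxE ltxx.
Qed.

Lemma bal (g : 'M[R]_3) (gs : g^T = g) (gu : g \in unitmx) (N F : 'M[R]_3) :
  (forall a b, (g *m F *m N^T) a b = (g *m F *m N^T) b a) ->
  invmx g *m N *m F^T = (invmx g *m N *m F^T)^T.
Proof.
move=> hS; set S := g *m F *m N^T.
have ST : S^T = S by apply/matrixP => i j; rewrite mxE hS.
have S2 : S^T = N *m F^T *m g by rewrite /S !trmx_mul trmxK gs mulmxA.
have NF : N *m F^T = S *m invmx g by rewrite -ST S2 mulmxK.
rewrite -mulmxA NF !trmx_mul trmx_inv gs.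
have -> : (N^T)^T *m (F^T *m g) = S^T by rewrite trmxK S2 mulmxA.
by rewrite ST mulmxA.
Qed.

Lemma sym_sum (g F : 'M[R]_3) (phi : 'I_3 -> R) (D : 'I_3 -> 'M[R]_3) :
  (forall i a b, (g *m F *m (D i)^T) a b = (g *m F *m (D i)^T) b a) ->
  forall a b, (g *m F *m (\sum_i phi i *: D i)^T) a b = (g *m F *m (\sum_i phi i *: D i)^T) b a.
Proof.
move=> h a b.
have -> : (\sum_i phi i *: D i)^T = \sum_i phi i *: (D i)^T.
  by apply/matrixP => x y; rewrite mxE !summxE; apply: eq_bigr => i _; rewrite !mxE.
rewrite mulmx_sumr !summxE; apply: eq_bigr => i _.
have sE : forall k (M : 'M[R]_3) x y, (k *: M) x y = k * M x y by move=> *; rewrite mxE.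
by rewrite -scalemxAr !sE h.
Qed.

Lemma dsum (f : 'I_3 -> 'M[R]_3 -> R) F : (forall i, differentiable (f i) F) ->
  differentiable (fun X => \sum_i f i X) F.
Proof.
move=> h; have -> : (fun X => \sum_i f i X) = \sum_i f i by apply/funext => X; rewrite fct_sumE.
exact: differentiable_sum.
Qed.

Lemma dmul (f h : 'M[R]_3 -> R) F : differentiable f F -> differentiable h F ->
  differentiable (fun X => f X * h X) F.
Proof. exact: differentiableM. Qed.

Definition psi1 (g : 'M[R]_3) (F : 'M[R]_3) : R := (F^T *m g *m F) 0 0.

Lemma psi1_diff g F : differentiable (psi1 g) F.
Proof.
have -> : psi1 g = fun X => \sum_k (\sum_l X l 0 * g l k) * X k 0.
  apply/funext => X; rewrite /psi1 mxE; apply: eq_bigr => k _; rewrite mxE.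
  by congr (_ * _); apply: eq_bigr => l _; rewrite mxE.
apply: dsum => k; apply: dmul; last exact: differentiable_coord.
apply: dsum => l; apply: dmul; first exact: differentiable_coord.
exact: differentiable_cst.
Qed.

Lemma derive_even (f : 'M[R]_3 -> R) (hf : forall X, f (- X) = f X) F v :
  'D_v f (- F) = 'D_(- v) f F.
Proof.
rewrite /derive.
have E : forall h : R, h^-1 *: ((f \o center F) (h *: v) - f (- F)) =
  h^-1 *: ((f \o shift F) (h *: - v) - f F).
  by move=> h /=; rewrite -[f (h *: v + - F)]hf opprD opprK -scalerN hf.
by rewrite (funext E).
Qed.

Lemma psi1_even g X : psi1 g (- X) = psi1 g X.
Proof.
rewrite /psi1; have -> : (- X)^T = - X^T by apply/matrixP => i j; rewrite !mxE.
by rewrite mulNmx mulmxN mulNmx opprK.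
Qed.

Lemma psi1_scale g (k : R) X : psi1 g (k *: X) = k ^+ 2 * psi1 g X.
Proof.
rewrite /psi1; have -> : (k *: X)^T = k *: X^T by apply/matrixP => i j; rewrite !mxE.
rewrite !(scalemxAl', scalemxAr') scalerA.
by rewrite [LHS]mxE expr2.
Qed.

Lemma euler g F : 'D_F (psi1 g) F = 2 * psi1 g F.
Proof.
set c := psi1 g F.
have -> : 'D_F (psi1 g) F = 'D_1 (fun t => (@Pol R c (c + c) c).[t] * ((1 : {poly R}).[t])^-1) 0.
  rewrite /derive; f_equal; f_equal; apply/funext => h /=.
  rewrite [_%:A]mulr1 !h1 invr1 !mulr1 !PolE.
  have -> : h *: F + F = (h + 1) *: F by rewrite scalerDl scale1r.
  rewrite psi1_scale -/c; congr (_ *: _).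
  ring.
rewrite (@rat_der R _ _ (_ : (1 : {poly R}).[0] != 0)).2; last by rewrite h1 oner_eq0.
by rewrite h1 C1' Pol'E invr1 mul1r mulr0 mulr0 add0r mulr2n mulrDl mul1r.
Qed.

Lemma g00_pos (g : 'M[R]_3)
  (gpd : forall v : 'rV[R]_3, v != 0 -> 0 < (v *m g *m v^T) 0 0) : 0 < g 0 0.
Proof.
have nz : (delta_mx 0 0 : 'rV[R]_3) != 0.
  apply/eqP => /(congr1 (fun m : 'rV[R]_3 => m 0 0)); rewrite !mxE eqxx /=.
  by apply/eqP; rewrite oner_eq0.
have := gpd _ nz; rewrite trmx_delta -rowE -colE.
by rewrite !mxE.
Qed.

Lemma psi1_one (g : 'M[R]_3) : psi1 g 1%:M = g 0 0.
Proof. by rewrite /psi1 trmx1 mul1mx mulmx1. Qed.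

Lemma D1nz (g : 'M[R]_3) : 0 < g 0 0 -> dF (psi1 g) 1%:M != 0.
Proof.
move=> g0; apply/eqP => D0.
have := euler g 1%:M; rewrite deriveE; last exact: psi1_diff.
rewrite dpsi_sum; last exact: psi1_diff.
rewrite D0 big1 => [|i _]; last by rewrite big1 // => j _; rewrite [(0 : 'M[R]_3) i j]mxE mulr0.
move/eqP; rewrite eq_sym mulf_eq0 pnatr_eq0 /= psi1_one => /eqP g00.
by move: g0; rewrite g00 ltxx.
Qed.

Lemma dF_even (g F : 'M[R]_3) : dF (psi1 g) (- F) = - dF (psi1 g) F.
Proof.
apply/matrixP => i j; rewrite !mxE derive_even; last exact: psi1_even.
by rewrite !deriveE ?linearN //; exact: psi1_diff.
Qed.

Lemma sym_scale (g F D : 'M[R]_3) (k : R) :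
  (forall a b, (g *m F *m D^T) a b = (g *m F *m D^T) b a) ->
  forall a b, (g *m F *m (k *: D)^T) a b = (g *m F *m (k *: D)^T) b a.
Proof.
move=> h a b.
have -> : (k *: D)^T = k *: D^T by apply/matrixP => x y; rewrite !mxE.
have sE : forall (M : 'M[R]_3) x y, (k *: M) x y = k * M x y by move=> *; rewrite mxE.
by rewrite -scalemxAr !sE h.
Qed.
End T.

Theorem mainTheorem2 (R : realType) (g : 'M[R]_3) (hg : is_metric g) :
  (* (i) *)
  (forall phi psi : 'I_3 -> 'M[R]_3 -> R,
     (forall i F, differentiable (psi i) F) ->
     (forall i, through_C g (phi i)) ->
     (forall i, through_C g (psi i)) ->
     balance_ang_mom (PK g phi psi)) /\
  (* (ii) an Ericksen solid: balanced but not objective *)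
  (exists phi1 psi1 : 'M[R]_3 -> R,
     through_C g psi1 /\
     (forall F, differentiable psi1 F) /\
     (forall F, phi1 F != 0) /\
     (exists Q F, g_orthogonal g Q /\ phi1 (Q *m F) <> phi1 F) /\
     balance_ang_mom (fun F => invmx g *m (phi1 F *: dF psi1 F)) /\
     ~ objective g (fun F => invmx g *m (phi1 F *: dF psi1 F))).
Proof.
case: hg => gs gpd.
have gu : g \in unitmx := @unit_g R g gpd.
split.
  move=> phi psi hd _ hpsi F.
  apply: (@bal R g gs gu) => a b.
  apply: (@sym_sum R) => i a' b'.
  exact: (@key_sym R g gs gpd (psi i) (hd i) (hpsi i)).
have orthN : g_orthogonal g (- 1%:M).
  rewrite /g_orthogonal.
  have -> : (- 1%:M : 'M[R]_3)^T = - 1%:M by apply/matrixP => i j; rewrite !mxE eq_sym.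
  by rewrite mulNmx mul1mx mulmxN mulmx1 opprK.
have pN : (if 0 < (- 1%:M : 'M[R]_3) 0 0 then 1 else 2) = 2 :> R.
  by rewrite !mxE eqxx /= oppr_gt0 ltr10.
have p1 : (if 0 < (1%:M : 'M[R]_3) 0 0 then 1 else 2) = 1 :> R.
  by rewrite !mxE eqxx /= ltr01.
exists (fun F => if 0 < F 0 0 then 1 else 2), (@psi1 R g).
split; first by exists (fun C => C 0 0).
split; first exact: (@psi1_diff R g).
split.
  by move=> F; case: ifP => _; [exact: oner_neq0 | rewrite pnatr_eq0].
split.
  exists (- 1%:M), 1%:M; split => //.
  by rewrite mulmx1 pN p1 => /eqP; rewrite pnatr_eq1.
split.
  move=> F; apply: (@bal R g gs gu) => a b; apply: (@sym_scale R) => a' b'.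
  have hC : exists f' : 'M[R]_3 -> R, forall F, @psi1 R g F = f' (F^T *m g *m F).
    by exists (fun C => C 0 0).
  exact: (@key_sym R g gs gpd (@psi1 R g) (@psi1_diff R g) hC).
move=> H; have := H (- 1%:M) 1%:M orthN.
rewrite mulmx1 pN p1 (@dF_even R g); set D := dF (@psi1 R g) 1%:M => E.
have E2 : 2 *: - D = - D.
  have := congr1 (mulmx g) E.
  by rewrite !mulKVmx // mulNmx mul1mx mulmxN mulKVmx // scale1r.
have D0 : D = 0.
  apply/matrixP => i j; have := congr1 (fun M : 'M[R]_3 => M i j) E2.
  rewrite !mxE => e; lra.
by have := @D1nz R g (@g00_pos R g gpd); rewrite -/D D0 eqxx.
Qed.
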